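(* Let $(\mathbf{Z}_\kappa,\Sigma)$ be a ring of Euclidean integers for the infinite cardinal $\kappa$. Let $\eta,\gamma<\kappa$ and let $\mathbf{x}\in\mathbb{Z}^\kappa$ satisfy $x_\alpha=0$ for all $\alpha\ge 2^\eta$. Define $\mathbf{y}\in\mathbb{Z}^\kappa$ by $y_\delta=x_\alpha$ if $\delta=2^\eta\gamma+\alpha$ for some $\alpha<2^\eta$, and $y_\delta=0$ otherwise. Then $\sum_\alpha x_\alpha=\sum_\delta y_\delta$.
   Context: Ordinal arithmetic ($2^\eta$, $2^\eta\gamma+\alpha$) is ordinary ordinal arithmetic. Every ordinal $\alpha$ has a unique base-2 normal form $\alpha=2^{\alpha_1}+\dots+2^{\alpha_n}$ with $\alpha_1>\dots>\alpha_n$; put $L_\alpha=\{\alpha_1,\dots,\alpha_n\}$. Formal inclusion: $\alpha\sqsubseteq\beta$ iff $L_\alpha\subseteq L_\beta$. $\alpha\vee\beta$ is the ordinal $\gamma$ with $L_\gamma=L_\alpha\cup L_\beta$. For $\mathbf{x}\in\mathbb{Z}^\kappa$, $\mathbf{f}_{\mathbf{x}}(\alpha)=\sum_{\beta\sqsubseteq\alpha}x_\beta$. A ring of Euclidean integers for $\kappa$ is a discretely ordered commutative integral domain $\mathbf{Z}_\kappa$ containing $\mathbb{Z}$ as an ordered subring, together with a map $\Sigma:\mathbb{Z}^\kappa\to\mathbf{Z}_\kappa$, written $\Sigma(\mathbf{x})=\sum_\alpha x_\alpha$, such that: (0) if only finitely many $x_\alpha\neq0$ then $\sum_\alpha x_\alpha$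 is the ordinary finite sum; (RA) every element of $\mathbf{Z}_\kappa$ is $\sum_\alpha x_\alpha$ for some $\mathbf{x}$; (LA) $u\sum_\alpha x_\alpha+v\sum_\alpha y_\alpha=\sum_\alpha(ux_\alpha+vy_\alpha)$ for $u,v\in\mathbb{Z}$; (CA) if there is $\theta<\kappa$ with $\mathbf{f}_{\mathbf{x}}(\delta)\le\mathbf{f}_{\mathbf{y}}(\delta)$ for all $\delta<\kappa$ with $\theta\sqsubseteq\delta$, then $\sum_\alpha x_\alpha\le\sum_\alpha y_\alpha$; (PA) $(\sum_\alpha x_\alpha)(\sum_\beta y_\beta)=\sum_\gamma z_\gamma$ with $z_\gamma=\sum_{\alpha\vee\beta=\gamma}x_\alpha y_\beta$. *)

(* Defs.v *)
(* Ordinals below the infinite cardinal kappa are modelled by a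
   well-ordered type O whose order type is an infinite initial ordinal (cardinal);
   ordinal arithmetic on O is given by its (uniquely determining) transfinite
   recursion equations. *)
From mathcomp Require Import all_boot all_order all_algebra.
From Stdlib Require Import ClassicalEpsilon.
Set Implicit Arguments. Unset Strict Implicit. Unset Printing Implicit Defensive.
Import Order.TTheory GRing.Theory Num.Theory.

Section OrdDefs.
Variables (d : Order.disp_t) (O : orderType d).

Definition is_succ_of (a s : O) : Prop :=
  (a < s)%O /\ forall b, (a < b)%O -> (s <= b)%O.

Definition is_limit (l : O) : Prop :=
  (exists b, (b < l)%O) /\ forall b, (b < l)%O -> exists c, (b < c)%O /\ (c < l)%O.

Definition is_lub (P : O -> Prop) (u : O) : Prop :=
  (forall b, P b -> (b <= u)%O) /\
  forall u', (forall b, P b -> (b <= u')%O) -> (u <= u')%O.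

Definition infinite_cardinal_order : Prop :=
  well_founded (fun a b : O => (a < b)%O) /\
  (forall s : seq O, exists a, a \notin s) /\
  (forall o : O, ~ exists f : O -> O, injective f /\ forall a, (f a < o)%O).

End OrdDefs.

Record ordinal_arith (d : Order.disp_t) (O : orderType d) := OrdinalArith {
  o0 : O;
  oadd : O -> O -> O;
  omul : O -> O -> O;
  oexp2 : O -> O;
  o0_min : forall a, (o0 <= a)%O;
  oadd0 : forall a, oadd a o0 = a;
  oaddS : forall a b s, is_succ_of b s -> is_succ_of (oadd a b) (oadd a s);
  oaddL : forall a l, is_limit l ->
            is_lub (fun c => exists2 b, (b < l)%O & c = oadd a b) (oadd a l);
  omul0 : forall a, omul a o0 = o0;
  omulS : forall a b s, is_succ_of b s -> omul a s = oadd (omul a b) a;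
  omulL : forall a l, is_limit l ->
            is_lub (fun c => exists2 b, (b < l)%O & c = omul a b) (omul a l);
  oexp20 : forall s, is_succ_of o0 s -> oexp2 o0 = s;
  oexp2S : forall b s, is_succ_of b s -> oexp2 s = oadd (oexp2 b) (oexp2 b);
  oexp2L : forall l, is_limit l ->
            is_lub (fun c => exists2 b, (b < l)%O & c = oexp2 b) (oexp2 l)
}.

Section BaseTwo.
Variables (d : Order.disp_t) (O : orderType d) (A : ordinal_arith O).

Definition oval (s : seq O) : O :=
  foldr (fun e acc => oadd A (oexp2 A e) acc) (o0 A) s.

Definition is_nf (a : O) (s : seq O) : Prop :=
  sorted (fun u v => (v < u)%O) s /\ a = oval s.

Definition L (a : O) : seq O := epsilon (inhabits [::]) (fun s => is_nf a s).

Definition fsub (b a : O) : Prop := {subset L b <= L a}.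

Definition fsubs (a : O) : seq O :=
  [seq oval (mask m (L a)) | m : (size (L a)).-tuple bool].

Definition is_join (a b g : O) : bool := perm_eq (undup (L a ++ L b)) (L g).

Definition fx (x : O -> int) (a : O) : int := \sum_(b <- fsubs a) x b.

Definition zprod (x y : O -> int) (g : O) : int :=
  \sum_(a <- fsubs g) \sum_(b <- fsubs g | is_join a b g) (x a * y b)%R.

End BaseTwo.

Local Open Scope ring_scope.

Definition discretely_ordered (R : realDomainType) : Prop :=
  forall r : R, ~ (0 < r /\ r < 1).

Record euclidean_integers (d : Order.disp_t) (O : orderType d) (A : ordinal_arith O)
    (R : realDomainType) := EuclideanIntegers {
  Sig : (O -> int) -> R;
  Sig_fin : forall (x : O -> int) (s : seq O), uniq s ->
     (forall a, x a != 0 -> a \in s) -> Sig x = \sum_(a <- s) (x a)%:~R;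
  Sig_RA : forall r : R, exists x, Sig x = r;
  Sig_LA : forall (u v : int) (x y : O -> int),
     u%:~R * Sig x + v%:~R * Sig y = Sig (fun a => u * x a + v * y a);
  Sig_CA : forall x y : O -> int,
     (exists theta, forall delta, fsub A theta delta -> fx A x delta <= fx A y delta) ->
     Sig x <= Sig y;
  Sig_PA : forall x y : O -> int, Sig x * Sig y = Sig (zprod A x y)
}.

(* Main.v *)
Require Import Defs.
From mathcomp Require Import all_boot all_order all_algebra.
From Stdlib Require Import Classical ClassicalEpsilon.
Import Order.TTheory GRing.Theory Num.Theory.
Set Implicit Arguments. Unset Strict Implicit. Unset Printing Implicit Defensive.

Section Ord.
Variables (d : Order.disp_t) (O : orderType d) (HO : infinite_cardinal_order O) (A : ordinal_arith O).
Local Open Scope order_scope.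
Local Notation z0 := (o0 A).
Local Notation ad := (oadd A).
Local Notation e2 := (oexp2 A).

Lemma wfO : well_founded (fun a b : O => a < b). Proof. exact: HO.1. Qed.

Lemma min_ex (P : O -> Prop) : (exists a, P a) -> exists a, P a /\ forall b, P b -> a <= b.
Proof.
move=> [a Pa]; apply: NNPP => H.
suff: forall c, ~ P c by move/(_ a).
move=> c; elim/(well_founded_ind wfO): c => c IH Pc.
apply: H; exists c; split => // b Pb; rewrite leNgt; apply/negP => bc.
exact: (IH b bc Pb).
Qed.

Lemma succ_ex (a : O) : (exists c, a < c) -> exists s, is_succ_of a s.
Proof.
move=> /min_ex [s [as_ H]]; exists s; split => //.
Qed.

Lemma succ_uniq (a s s' : O) : is_succ_of a s -> is_succ_of a s' -> s = s'.
Proof.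
move=> [h1 h2] [h1' h2']; apply: le_anti; rewrite h2 // h2' //.
Qed.

Lemma lub_uniq (P : O -> Prop) (u v : O) : is_lub P u -> is_lub P v -> u = v.
Proof. by move=> [h1 h2] [h1' h2']; apply: le_anti; rewrite h2 // h2'. Qed.

Lemma lub_ext (P Q : O -> Prop) (u v : O) : is_lub P u -> is_lub Q v ->
  (forall w, (forall b, P b -> b <= w) <-> (forall b, Q b -> b <= w)) -> u = v.
Proof.
move=> [h1 h2] [h1' h2'] E; apply: le_anti; rewrite h2 ?h2' //.
  by apply/E.
by apply/E.
Qed.

Lemma trich (c : O) : c = z0 \/ (exists b, is_succ_of b c) \/ is_limit c.
Proof.
case: (classic (c = z0)) => [->|nz]; first by left.
right; case: (classic (exists b, is_succ_of b c)) => [h|ns]; first by left.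
right; have c0 : z0 < c by rewrite lt_def (o0_min A) andbT; apply/eqP.
split; first by exists z0.
move=> b bc; have [s hs] := succ_ex (ex_intro _ c bc).
exists s; split; first exact: hs.1.
have : s <= c by apply: hs.2.
rewrite le_eqVlt => /orP [/eqP E|//]; exfalso; apply: ns; exists b; by rewrite -E.
Qed.

Lemma lub_le (P : O -> Prop) (u w : O) : is_lub P u -> (forall b, P b -> b <= w) -> u <= w.
Proof. by move=> [_ h] /h. Qed.

Lemma le_lub (P : O -> Prop) (u b : O) : is_lub P u -> P b -> b <= u.
Proof. by move=> [h _] /h. Qed.

Lemma add_lt (a b c : O) : b < c -> ad a b < ad a c.
Proof.
elim/(well_founded_ind wfO): c b => c IH b bc.
have [E|[[c' hc]|hl]] := trich c.
- by move: bc; rewrite E ltNge (o0_min A).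
- have hs := oaddS A a hc.
  have : b <= c' by rewrite leNgt; apply/negP => /hc.2; rewrite leNgt bc.
  rewrite le_eqVlt => /orP [/eqP->|bc']; first exact: hs.1.
  exact: lt_trans (IH _ hc.1 _ bc') hs.1.
- have [c2 [bc2 c2c]] := hl.2 _ bc.
  apply: lt_le_trans (IH _ c2c _ bc2) _.
  by apply: le_lub (oaddL A a hl) _; exists c2.
Qed.

Lemma add_le (a b c : O) : b <= c -> ad a b <= ad a c.
Proof. by rewrite le_eqVlt => /orP [/eqP->//|/(add_lt a)/ltW]. Qed.

Lemma add_ltE (a b c : O) : (ad a b < ad a c) = (b < c).
Proof.
apply/idP/idP; last exact: add_lt.
by rewrite !ltNge; apply: contra => /(add_le a).
Qed.

Lemma add_leE (a b c : O) : (ad a b <= ad a c) = (b <= c).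
Proof. by rewrite !leNgt add_ltE. Qed.

Lemma add_inj (a b c : O) : ad a b = ad a c -> b = c.
Proof. by move=> E; apply: le_anti; apply/andP; split; rewrite -(add_leE a) E. Qed.

Lemma le_addl (a b : O) : b <= ad a b.
Proof.
elim/(well_founded_ind wfO): b => b IH.
rewrite leNgt; apply/negP => h.
have := IH _ h; rewrite leNgt (add_lt a h) //.
Qed.

Lemma le_addr (a b : O) : a <= ad a b.
Proof. by rewrite -{1}(oadd0 A a) add_le // (o0_min A). Qed.

Lemma sub_ex (a c : O) : a <= c -> exists w, ad a w = c.
Proof.
move=> ac.
have [w [hw wmin]] := min_ex (ex_intro (fun w => c <= ad a w) c (le_addl a c)).
exists w; apply: le_anti; rewrite hw andbT.
rewrite leNgt; apply/negP => cw.
have below v : v < w -> ad a v < c.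
  by move=> vw; rewrite ltNge; apply/negP => /wmin; rewrite leNgt vw.
have [E|[[v hv]|hl]] := trich w.
- by move: cw; rewrite E (oadd0 A) ltNge ac.
- have := (oaddS A a hv).2 _ (below _ hv.1); by rewrite leNgt cw.
- have : ad a w <= c.
    by apply: lub_le (oaddL A a hl) _ => b [v vw ->]; apply/ltW/below.
  by rewrite leNgt cw.
Qed.

Lemma add0l (b : O) : ad z0 b = b.
Proof.
elim/(well_founded_ind wfO): b => b IH.
have [E|[[c hc]|hl]] := trich b.
- by rewrite E (oadd0 A).
- have := oaddS A z0 hc; rewrite IH; last exact: hc.1.
  by move/succ_uniq; apply.
- apply: (lub_uniq (oaddL A z0 hl)); split.
    by move=> c [v vl ->]; rewrite IH // ltW.
  move=> u hu; rewrite leNgt; apply/negP => ul.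
  have [c [uc cl]] := hl.2 _ ul.
  by have := hu c (ex_intro2 _ _ c cl (esym (IH _ cl))); rewrite leNgt uc.
Qed.

Lemma add_lim_below (b l e : O) : is_limit l -> e < ad b l -> exists c2, e < ad b c2 /\ c2 < l.
Proof.
move=> hl ebl; apply: NNPP => H; have : ad b l <= e.
  apply: lub_le (oaddL A b hl) _ => z' [v vl ->]; rewrite leNgt; apply/negP => ev.
  by apply: H; exists v.
by rewrite leNgt ebl.
Qed.

Lemma add_limit (b l : O) : is_limit l -> is_limit (ad b l).
Proof.
move=> hl; split.
  have [c0 c0l] := hl.1; exists (ad b c0); exact: add_lt.
move=> e ebl.
have [c2 [ec2 c2l]] := add_lim_below hl ebl.
by exists (ad b c2); split => //; apply: add_lt.
Qed.

Lemma addA (a b c : O) : ad (ad a b) c = ad a (ad b c).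
Proof.
elim/(well_founded_ind wfO): c => c IH.
have [E|[[c' hc]|hl]] := trich c.
- by rewrite E !(oadd0 A).
- have h1 := oaddS A (ad a b) hc.
  have h2 := oaddS A a (oaddS A b hc).
  rewrite IH in h1; last exact: hc.1.
  exact: succ_uniq h1 h2.
- apply: lub_ext (oaddL A (ad a b) hl) (oaddL A a (add_limit b hl)) _ => w; split.
  + move=> hw z [e ebl ->].
    have [c2 [ec2 c2l]] := add_lim_below hl ebl.
    apply: le_trans (ltW (add_lt a ec2)) _.
    by rewrite -IH //; apply: hw; exists c2.
  + move=> hw z [v vl ->]; rewrite IH //; apply: hw; exists (ad b v) => //.
    exact: add_lt.
Qed.


Lemma exists_pos : exists u : O, z0 < u.
Proof.
have [u hu] := HO.2.1 [:: z0].
exists u; rewrite lt_def (o0_min A) andbT; apply/negP => /eqP E.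
by move: hu; rewrite E mem_seq1 eqxx.
Qed.

Lemma nomax (a : O) : exists c, a < c.
Proof. have [u hu] := exists_pos; exists (ad a u); by rewrite -{1}(oadd0 A a) add_ltE. Qed.

Lemma succ_of (a : O) : exists s, is_succ_of a s.
Proof. exact: succ_ex (nomax a). Qed.

Lemma lim_pos (l : O) : is_limit l -> z0 < l.
Proof. by move=> [[b bl] _]; apply: le_lt_trans bl; apply: (o0_min A). Qed.

Lemma e2_pos (b : O) : z0 < e2 b.
Proof.
have [s hs] := succ_of z0.
have h0 : z0 < e2 z0 by rewrite (oexp20 hs); exact: hs.1.
elim/(well_founded_ind wfO): b => b IH.
have [E|[[c hc]|hl]] := trich b.
- by rewrite E.
- rewrite (oexp2S A hc); apply: lt_le_trans (IH _ hc.1) _; exact: le_addr.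
- apply: lt_le_trans h0 _; apply: le_lub (oexp2L A hl) _; exists z0 => //.
  exact: lim_pos.
Qed.

Lemma e2_lt (b c : O) : b < c -> e2 b < e2 c.
Proof.
elim/(well_founded_ind wfO): c b => c IH b bc.
have [E|[[c' hc]|hl]] := trich c.
- by move: bc; rewrite E ltNge (o0_min A).
- have hs : e2 c' < e2 c.
    by rewrite (oexp2S A hc) -{1}(oadd0 A (e2 c')) add_ltE e2_pos.
  have : b <= c' by rewrite leNgt; apply/negP => /hc.2; rewrite leNgt bc.
  rewrite le_eqVlt => /orP [/eqP->|bc'] //.
  exact: lt_trans (IH _ hc.1 _ bc') hs.
- have [c2 [bc2 c2c]] := hl.2 _ bc.
  apply: lt_le_trans (IH _ c2c _ bc2) _.
  by apply: le_lub (oexp2L A hl) _; exists c2.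
Qed.

Lemma e2_le (b c : O) : b <= c -> e2 b <= e2 c.
Proof. by rewrite le_eqVlt => /orP [/eqP->//|/e2_lt/ltW]. Qed.

Lemma e2_ltE (b c : O) : (e2 b < e2 c) = (b < c).
Proof.
apply/idP/idP; last exact: e2_lt.
by rewrite !ltNge; apply: contra => /e2_le.
Qed.

Lemma e2_leE (b c : O) : (e2 b <= e2 c) = (b <= c).
Proof. by rewrite !leNgt e2_ltE. Qed.

Lemma e2_double (b c : O) : b < c -> ad (e2 b) (e2 b) <= e2 c.
Proof.
move=> bc; have [s hs] := succ_of b.
rewrite -(oexp2S A hs); apply: e2_le; exact: hs.2.
Qed.

Local Notation ov := (oval A).
Definition rr := (fun u v : O => v < u).

Lemma rr_trans : transitive rr.
Proof. by move=> y x z h1 h2; exact: lt_trans h2 h1. Qed.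

Lemma rr_irr : irreflexive rr.
Proof. by move=> x; rewrite /rr ltxx. Qed.

Lemma all_below (e : O) s : sorted rr (e :: s) -> all (fun g => g < e) s.
Proof. by move=> /= h; apply: (order_path_min rr_trans h). Qed.

Lemma all_lt_head (e f : O) s : sorted rr (e :: s) -> e < f -> all (fun g => g < f) (e :: s).
Proof.
move=> h ef /=; rewrite ef /=.
by apply: sub_all (all_below h) => g ge; apply: lt_trans ge ef.
Qed.

Lemma oval_lt (s : seq O) (e : O) : sorted rr s -> all (fun f => f < e) s -> ov s < e2 e.
Proof.
elim: s e => [|f s IH] e /=; first by move=> _ _; exact: e2_pos.
move=> hs /andP [fe _].
have hs' : sorted rr s := path_sorted hs.
have := IH f hs' (all_below hs) => h.
apply: lt_le_trans (e2_double fe).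
by rewrite add_ltE.
Qed.

Lemma nf_uniq (s t : seq O) : sorted rr s -> sorted rr t -> ov s = ov t -> s = t.
Proof.
elim: s t => [|e s IH] [|f t] // hs ht E; rewrite /= in E.
- have := le_addr (e2 f) (ov t); rewrite -E => h.
  by have := e2_pos f; rewrite ltNge h.
- have := le_addr (e2 e) (ov s); rewrite E => h.
  by have := e2_pos e; rewrite ltNge h.
- case: (ltgtP e f) => [ef|fe|ef].
  + have := oval_lt hs (all_lt_head hs ef); rewrite /= E => h.
    by have := le_addr (e2 f) (ov t); rewrite leNgt h.
  + have := oval_lt ht (all_lt_head ht fe); rewrite /= -E => h.
    by have := le_addr (e2 e) (ov s); rewrite leNgt h.
  + rewrite ef in E hs *; congr (_ :: _); apply: IH.
    * exact: path_sorted hs.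
    * exact: path_sorted ht.
    * exact: add_inj E.
Qed.

Lemma le_e2 (b : O) : b <= e2 b.
Proof.
elim/(well_founded_ind wfO): b => b IH.
rewrite leNgt; apply/negP => h.
by have := IH _ h; rewrite leNgt e2_lt.
Qed.

Lemma nf_ex (a : O) : exists s, sorted rr s /\ ov s = a.
Proof.
elim/(well_founded_ind wfO): a => a IH.
case: (classic (a = z0)) => [->|nz]; first by exists [::].
have a0 : z0 < a by rewrite lt_def (o0_min A) andbT; apply/eqP.
have [c0 ac0] := nomax a.
have ex : exists c, a < e2 c by exists c0; apply: lt_le_trans ac0 (le_e2 _).
have [c [hc cmin]] := min_ex ex.
have below b : b < c -> e2 b <= a.
  by move=> bc; rewrite leNgt; apply/negP => /cmin; rewrite leNgt bc.
have [E|[[e he]|hl]] := trich c.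
- have [s hs] := succ_of z0.
  move: hc; rewrite E (oexp20 hs) => h.
  by have := hs.2 _ a0; rewrite leNgt h.
- have hea := below _ he.1.
  have [r0 Er] := sub_ex hea.
  have r0e : r0 < e2 e by move: hc; rewrite (oexp2S A he) -Er add_ltE.
  have [t [ht Et]] := IH r0 (lt_le_trans r0e hea).
  exists (e :: t); split; last by rewrite /= Et.
  case: t ht Et => [|g t] //= ht Et.
  rewrite ht andbT /rr -e2_ltE; apply: le_lt_trans r0e.
  by rewrite -Et; apply: le_addr.
- have : e2 c <= a by apply: lub_le (oexp2L A hl) _ => z [b bc ->]; exact: below.
  by rewrite leNgt hc.
Qed.

Lemma L_spec (a : O) : sorted rr (L A a) /\ ov (L A a) = a.
Proof.
have [s [hs Es]] := nf_ex a.
have := epsilon_spec (inhabits [::]) (fun s => is_nf A a s) (ex_intro _ s (conj hs (esym Es))).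
by rewrite /L => -[h1 h2].
Qed.

Lemma L_eq (a : O) s : sorted rr s -> ov s = a -> L A a = s.
Proof. by move=> hs Es; have [h1 h2] := L_spec a; apply: nf_uniq h1 hs _; rewrite h2. Qed.

Lemma oval_cat (u v : seq O) : ov (u ++ v) = ad (ov u) (ov v).
Proof. by elim: u => [|e u IH] /=; [rewrite add0l | rewrite IH addA]. Qed.


Variable eta : O.
Definition hi (s : seq O) := filter (fun e => eta <= e) s.
Definition lo (s : seq O) := filter (fun e => e < eta) s.
Definition HH (c : O) := all (fun e => eta <= e) (L A c).

Lemma hi_nil s : all (fun g => g < eta) s -> hi s = [::].
Proof. by elim: s => //= g s IH /andP [h1 h2]; rewrite leNgt h1 /= IH. Qed.

Lemma lo_nil s : all (fun g => eta <= g) s -> lo s = [::].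
Proof. by elim: s => //= g s IH /andP [h1 h2]; rewrite ltNge h1 /= IH. Qed.

Lemma hi_cat u v : hi (u ++ v) = hi u ++ hi v.
Proof. exact: filter_cat. Qed.

Lemma hi_all s : all (fun e => eta <= e) s -> hi s = s.
Proof. by move/all_filterP. Qed.

Lemma split_sorted s : sorted rr s -> s = hi s ++ lo s.
Proof.
elim: s => //= e s IH hs; have hs' := path_sorted hs.
case: (leP eta e) => he /=.
- by rewrite -IH.
- have := all_lt_head hs he => /= /andP [_ hall].
  rewrite hi_nil //=; congr (_ :: _); apply/esym/all_filterP; exact: hall.
Qed.

Lemma lt_eta_all s : sorted rr s -> ov s < e2 eta -> all (fun g => g < eta) s.
Proof.
case: s => [|e s] // hs h.
have ee : e < eta.
  by rewrite -e2_ltE; apply: le_lt_trans h; apply: le_addr.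
exact: all_lt_head hs ee.
Qed.

Lemma sorted_cat2 (u v : seq O) : sorted rr u -> sorted rr v ->
  all (fun e => eta <= e) u -> all (fun g => g < eta) v -> sorted rr (u ++ v).
Proof.
case: u => [|a u] // hu hv hau hav.
rewrite /= cat_path; rewrite /= in hu; rewrite hu /=.
case: v hv hav => [|b v] //= hv /andP [hb _].
rewrite hv andbT /rr.
apply: lt_le_trans hb _.
exact: (allP hau) _ (mem_last a u).
Qed.

Lemma L_cat (Y W : O) : HH Y -> W < e2 eta -> L A (ad Y W) = L A Y ++ L A W.
Proof.
move=> hY hW; have [sY EY] := L_spec Y; have [sW EW] := L_spec W.
apply: L_eq; last by rewrite oval_cat EY EW.
apply: sorted_cat2 => //; apply: lt_eta_all => //; by rewrite EW.
Qed.

Lemma KK (Y W : O) : HH Y -> z0 < W -> W < e2 eta -> ~ HH (ad Y W).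
Proof.
move=> hY W0 hW; rewrite /HH L_cat // all_cat => /andP [_ h].
have [sW EW] := L_spec W.
have := lt_eta_all sW; rewrite EW => /(_ hW).
case E: (L A W) h => [|g t] /=.
  by move: EW; rewrite E /= => E0; move: W0; rewrite -E0 ltxx.
by move=> /andP [h1 _] /andP [h2 _]; move: h1; rewrite leNgt h2.
Qed.

Lemma nonH (c : O) : ~ HH c -> exists U V, c = ad U V /\ HH U /\ z0 < V /\ V < e2 eta.
Proof.
move=> nh; have [sc Ec] := L_spec c.
set s := L A c in sc Ec nh.
exists (ov (hi s)), (ov (lo s)).
have shi : sorted rr (hi s) := sorted_filter rr_trans _ sc.
have slo : sorted rr (lo s) := sorted_filter rr_trans _ sc.
split; first by rewrite -oval_cat -split_sorted.
split; first by rewrite /HH (L_eq shi erefl) filter_all.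
split; last by apply: oval_lt slo (filter_all _ _).
case E: (lo s) => [|g t].
  exfalso; apply: nh; rewrite /HH -/s (split_sorted sc) E cats0; exact: filter_all.
by rewrite /=; apply: lt_le_trans (e2_pos g) (le_addr _ _).
Qed.

Lemma H_P (g : O) : HH (omul A (e2 eta) g).
Proof.
elim/(well_founded_ind wfO): g => g IH.
have [E|[[b hb]|hl]] := trich g.
- by rewrite E omul0 /HH (@L_eq z0 [::]).
- rewrite (omulS A (e2 eta) hb); have hP := IH _ hb.1.
  set Pb := omul A (e2 eta) b in hP *.
  apply: NNPP => nh; have [U [V [EX [HU [V0 Veta]]]]] := nonH nh.
  case: (leP U Pb) => hU.
  + have [W EW] := sub_ex hU.
    move: EX; rewrite -EW addA => /add_inj EV.
    by have := le_addl W (e2 eta); rewrite EV leNgt Veta.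
  + have [W EW] := sub_ex (ltW hU).
    have W0 : z0 < W.
      rewrite lt_def (o0_min A) andbT; apply/eqP => W0.
      by move: hU; rewrite -EW W0 (oadd0 A) ltxx.
    move: EX; rewrite -EW addA => /add_inj EV.
    have Weta : W < e2 eta by rewrite EV -{1}(oadd0 A W) add_ltE.
    by apply: (KK hP W0 Weta); rewrite EW.
- apply: NNPP => nh; have [U [V [EX [HU [V0 Veta]]]]] := nonH nh.
  set X := omul A (e2 eta) g in EX nh.
  have UX : U < X by rewrite EX -{1}(oadd0 A U) add_ltE.
  have [b [bg Ub]] : exists b, b < g /\ U < omul A (e2 eta) b.
    apply: NNPP => H'; have : X <= U.
      apply: lub_le (omulL A (e2 eta) hl) _ => z [b bg ->]; rewrite leNgt; apply/negP => h.
      by apply: H'; exists b.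
    by rewrite leNgt UX.
  have PX : omul A (e2 eta) b <= X by apply: le_lub (omulL A (e2 eta) hl) _; exists b.
  have [W EW] := sub_ex (ltW Ub).
  have W0 : z0 < W.
    rewrite lt_def (o0_min A) andbT; apply/eqP => W0.
    by move: Ub; rewrite -EW W0 (oadd0 A) ltxx.
  have Weta : W < e2 eta.
    apply: le_lt_trans Veta; rewrite -(add_leE U) -EX EW //.
  by apply: (KK HU W0 Weta); rewrite EW; apply: IH.
Qed.


Local Close Scope order_scope.
Local Open Scope ring_scope.

Fixpoint subs (s : seq O) : seq (seq O) :=
  if s is a :: s' then map (cons a) (subs s') ++ subs s' else [:: [::]].

Lemma big_tuple_cons (n : nat) (G : (n.+1).-tuple bool -> int) :
  \sum_(m : n.+1.-tuple bool) G m = \sum_(b : bool) \sum_(t : n.-tuple bool) G [tuple of b :: t].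
Proof.
rewrite pair_big (reindex (fun p : bool * n.-tuple bool => [tuple of p.1 :: p.2])) //=.
exists (fun m : n.+1.-tuple bool => (thead m, [tuple of behead m])) => [[b t] _ | m _].
  by congr pair; apply: val_inj.
by rewrite -tuple_eta.
Qed.

Lemma sum_mask (F : seq O -> int) s :
  \sum_(m : (size s).-tuple bool) F (mask m s) = \sum_(t <- subs s) F t.
Proof.
elim: s F => [|a s IH] F.
  rewrite big_seq1 (big_pred1 [tuple]) ?mask0 // => t.
  by apply/esym/eqP/val_inj; case: t => [[]].
rewrite big_tuple_cons big_bool /= big_cat big_map.
by rewrite (IH (fun u => F (a :: u))) (IH F).
Qed.

Lemma subs_cat (F : seq O -> int) u v :
  \sum_(t <- subs (u ++ v)) F t = \sum_(t1 <- subs u) \sum_(t2 <- subs v) F (t1 ++ t2).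
Proof.
elim: u F => [|a u IH] F /=; first by rewrite big_seq1.
by rewrite !big_cat !big_map (IH F) (IH (fun t => F (a :: t))).
Qed.

Lemma mem_subs (t s : seq O) : t \in subs s -> subseq t s.
Proof.
elim: s t => [|a s IH] t /=; first by rewrite inE => /eqP->.
rewrite mem_cat => /orP [/mapP [u hu ->]|h].
  by rewrite /= eqxx; apply: IH.
exact: subseq_trans (IH _ h) (subseq_cons s a).
Qed.

Lemma count_subs (c : int) (h p : seq O) : uniq h -> subseq p h ->
  \sum_(t <- subs h) (if t == p then c else 0) = c.
Proof.
elim: h p => [|a h IH] p.
  by move=> _; rewrite subseq0 => /eqP->; rewrite /= big_seq1 eqxx.
move=> /= /andP [ah uh] hp; rewrite big_cat big_map.
case: p hp => [|b p] hp.
  rewrite big1 //= add0r; exact: IH uh (sub0seq h).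
rewrite /= in hp; case: (b =P a) hp => [Eb|nba] hp; first subst b.
  under eq_bigr do rewrite eqseq_cons eqxx /=.
  rewrite IH // big1_seq /=; first by rewrite addr0.
  move=> t /= ht.
  case: eqP => // Et; exfalso; move: ah; rewrite (mem_subseq (mem_subs ht)) //.
  by rewrite Et mem_head.
rewrite big1 /=; first by rewrite add0r IH.
by move=> t _; rewrite eqseq_cons; case: eqP => // E; exfalso; apply: nba.
Qed.


Lemma subset_subseq (p h : seq O) : sorted rr p -> sorted rr h -> {subset p <= h} -> subseq p h.
Proof.
elim: h p => [|a h IH] p sp sh sub.
  case: p sp sub => // b p _ sub.
  by have := sub b (mem_head _ _); rewrite in_nil.
case: p sp sub => [|b p] sp sub; first exact: sub0seq.
rewrite /=; case: (b =P a) => [Eb|nba].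
- subst b; apply: IH; [exact: path_sorted sp | exact: path_sorted sh |].
  move=> c cp; have := sub c; rewrite !inE cp orbT => /(_ isT) /orP [/eqP ca|//].
  by have := (allP (all_below sp)) c cp; rewrite ca ltxx.
- apply: IH => //; first exact: path_sorted sh.
  move=> c cp; have := sub c cp; rewrite inE => /orP [/eqP ca|//].
  have : b \in h.
    by have := sub b (mem_head _ _); rewrite inE => /orP [/eqP E|//]; exfalso; apply: nba.
  move=> /(allP (all_below sh)) ba.
  move: cp; rewrite inE => /orP [/eqP cb|cp].
    by move: ba; rewrite -cb ca ltxx.
  have := (allP (all_below sp)) c cp; rewrite ca => ab.
  by have := lt_trans ab ba; rewrite ltxx.
Qed.

Lemma fsubs_sum (F : O -> int) (delta : O) :
  fx A F delta = \sum_(t <- subs (L A delta)) F (ov t).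
Proof. by rewrite /fx /fsubs big_map big_enum /= -(sum_mask (fun t => F (ov t))); apply: eq_bigl => m; rewrite inE. Qed.

Lemma fx_eq (gamma : O) (x y : O -> int)
 (hx : forall a, (e2 eta <= a)%O -> x a = 0)
 (hy1 : forall a, (a < e2 eta)%O -> y (ad (omul A (e2 eta) gamma) a) = x a)
 (hy0 : forall delta, (forall a, (a < e2 eta)%O -> delta <> ad (omul A (e2 eta) gamma) a) -> y delta = 0)
 (delta : O) : fsub A (omul A (e2 eta) gamma) delta -> fx A x delta = fx A y delta.
Proof.
move=> hsub.
have HP : HH (omul A (e2 eta) gamma) := H_P gamma.
set P := omul A (e2 eta) gamma in hy1 hy0 hsub HP.
have [sP EP] := L_spec P.
have [sd Ed] := L_spec delta.
rewrite /fsub in hsub.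
set s := L A delta in sd Ed hsub.
set p := L A P in sP EP HP hsub.
have Es := split_sorted sd.
have Fsum F : fx A F delta = \sum_(t1 <- subs (hi s)) \sum_(t2 <- subs (lo s)) F (ov (t1 ++ t2)).
  by rewrite fsubs_sum -/s -(subs_cat (fun t => F (ov t))) -Es.
have uh : uniq (hi s) by apply: filter_uniq; exact: (sorted_uniq rr_trans rr_irr sd).
have facts t1 t2 : t1 \in subs (hi s) -> t2 \in subs (lo s) ->
   [/\ all (fun e => (eta <= e)%O) t1, all (fun e => (e < eta)%O) t2,
       sorted rr (t1 ++ t2) & (ov t2 < e2 eta)%O].
  move=> h1 h2; have s1 := mem_subs h1; have s2 := mem_subs h2.
  have a1 : all (fun e => (eta <= e)%O) t1.
    by apply/allP => c /(mem_subseq s1); rewrite mem_filter => /andP [].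
  have a2 : all (fun e => (e < eta)%O) t2.
    by apply/allP => c /(mem_subseq s2); rewrite mem_filter => /andP [].
  have st : sorted rr (t1 ++ t2).
    have sub12 : subseq (t1 ++ t2) s by rewrite Es; apply: cat_subseq.
    exact: (subseq_sorted rr_trans sub12 sd).
  split => //; apply: oval_lt a2.
  exact: (subseq_sorted rr_trans s2 (sorted_filter rr_trans _ sd)).
set S := \sum_(t2 <- subs (lo s)) x (ov t2).
have LX : fx A x delta = S.
  rewrite Fsum -[RHS](count_subs S uh (sub0seq _)).
  apply: eq_big_seq => t1 ht1; case: eqP => [-> //|ne].
  apply: big1_seq => t2 /= ht2.
  have [a1 _ _ _] := facts _ _ ht1 ht2.
  case: t1 ne a1 {ht1} => [//|e t1] _ /= /andP [ee _].
  apply: hx; apply: le_trans (le_addr _ _); exact: e2_le.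
have LY : fx A y delta = S.
  have ps : subseq p (hi s).
    apply: subset_subseq => //; first exact: (sorted_filter rr_trans _ sd).
    by move=> c cp; rewrite mem_filter (hsub c cp) andbT; apply: (allP HP).
  rewrite Fsum -[RHS](count_subs S uh ps).
  apply: eq_big_seq => t1 ht1; case: eqP => [Et|ne].
    apply: eq_big_seq => t2 ht2; rewrite Et oval_cat EP; apply: hy1.
    by have [_ _ _ ->] := facts _ _ ht1 ht2.
  apply: big1_seq => t2 /= ht2.
  have [a1 a2 st lt2] := facts _ _ ht1 ht2.
  apply: hy0 => a ha E; apply: ne.
  have h1 : L A (ov (t1 ++ t2)) = t1 ++ t2 by apply: L_eq.
  have [sa Ea] := L_spec a.
  have la : all (fun e => (e < eta)%O) (L A a) by apply: lt_eta_all; rewrite // Ea.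
  move: h1; rewrite E L_cat // => /(congr1 hi); rewrite !hi_cat.
  rewrite (hi_nil a2) (hi_nil la) !cats0.
  by rewrite (hi_all a1) (hi_all HP).
by rewrite LX LY.
Qed.

End Ord.

Theorem mainTheorem4 (d : Order.disp_t) (O : orderType d)
  (HO : infinite_cardinal_order O) (A : ordinal_arith O)
  (R : realDomainType) (HR : discretely_ordered R)
  (E : euclidean_integers A R)
  (eta gamma : O) (x y : O -> int)
  (hx : forall a, (oexp2 A eta <= a)%O -> x a = 0%R)
  (hy1 : forall a, (a < oexp2 A eta)%O ->
           y (oadd A (omul A (oexp2 A eta) gamma) a) = x a)
  (hy0 : forall delta, (forall a, (a < oexp2 A eta)%O ->
           delta <> oadd A (omul A (oexp2 A eta) gamma) a) -> y delta = 0%R) :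
  Sig E x = Sig E y.
Proof.
apply/eqP; rewrite eq_le; apply/andP; split; apply: Sig_CA;
  exists (omul A (oexp2 A eta) gamma) => delta hd;
  by rewrite (fx_eq HO hx hy1 hy0 hd).
Qed.
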